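(* For every integer $N\ge 2$, $\displaystyle\sum_{n=2}^N\frac{1}{n}<\frac{\ln N}{(N+1)\ln\!\big(\frac{N+1}{N}\big)}$. *)

(* Defs.v *)
From Stdlib Require Import Reals.

(* Main.v *)
From Stdlib Require Import Reals Lra Lia Psatz.
From Coquelicot Require Import Coquelicot.
Require Import Defs.
Open Scope R_scope.

Lemma lnB (y : R) : 0 <= y < 1 -> y + y^2/2 + y^3/3 <= - ln (1 - y).
Proof.
  intros [H0 H1]. destruct (Req_dec y 0) as [->|Hy].
  { replace (1-0) with 1 by ring. rewrite ln_1. lra. }
  set (h := fun t => - ln (1 - t) - t - t^2/2 - t^3/3).
  destruct (MVT_cor2 h (fun t => t^3 / (1 - t)) 0 y) as [c [Hc1 Hc2]]; [lra| |].
  - intros c Hc. apply is_derive_Reals. unfold h.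
    auto_derive. lra. field. lra.
  - unfold h in Hc1. replace (1-0) with 1 in Hc1 by ring. rewrite ln_1 in Hc1.
    assert (0 <= c ^ 3 / (1 - c) * (y - 0)).
    { apply Rmult_le_pos; [|lra]. apply Rdiv_le_0_compat. apply pow_le; lra. lra. }
    lra.
Qed.

Lemma lnA (x : R) : 0 <= x -> ln (1 + x) <= x - x^2/2 + x^3/3.
Proof.
  intros H0. destruct (Req_dec x 0) as [->|Hx].
  { replace (1+0) with 1 by ring. rewrite ln_1. lra. }
  set (h := fun t => t - t^2/2 + t^3/3 - ln (1 + t)).
  destruct (MVT_cor2 h (fun t => t^3 / (1 + t)) 0 x) as [c [Hc1 Hc2]]; [lra| |].
  - intros c Hc. apply is_derive_Reals. unfold h.
    auto_derive. lra. field. lra.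
  - unfold h in Hc1. replace (1+0) with 1 in Hc1 by ring. rewrite ln_1 in Hc1.
    assert (0 <= c ^ 3 / (1 + c) * (x - 0)).
    { apply Rmult_le_pos; [|lra]. apply Rdiv_le_0_compat. apply pow_le; lra. lra. }
    lra.
Qed.

Lemma sumS (f : nat -> R) (k : nat) :
  sum_f 2 (S (k + 2)) f = sum_f 2 (k + 2) f + f (S (k+2)).
Proof.
  unfold sum_f. replace (S (k+2) - 2)%nat with (S k) by lia.
  replace (k+2-2)%nat with k by lia. simpl. reflexivity.
Qed.

Lemma sum_nonneg (k : nat) : 0 <= sum_f 2 (k+2) (fun n => / INR n).
Proof.
  unfold sum_f. apply cond_pos_sum. intros n. apply Rlt_le, Rinv_0_lt_compat.
  apply lt_0_INR. lia.
Qed.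

Lemma gpos (k : nat) :
  let N := INR (k+2) in
  sum_f 2 (k+2) (fun n => / INR n) * (1 + / (2 * N)) < ln N.
Proof.
  induction k as [|k IH]; intros N.
  - unfold N, sum_f. simpl. 
    assert (H := lnB (1/2)). replace (1 - 1/2) with (/2) in H by field.
    rewrite ln_Rinv in H by lra. replace (1+1) with 2 by ring. lra.
  - simpl in IH. 
    replace (S k + 2)%nat with (S (k+2)) in * by lia.
    rewrite sumS. set (M := INR (k+2)) in *.
    assert (HM : 2 <= M) by (unfold M; replace 2 with (INR 2) by (simpl; ring); apply le_INR; lia).
    unfold N. rewrite S_INR. fold M.
    assert (Hs := sum_nonneg k). set (S0 := sum_f 2 (k+2) (fun n => / INR n)) in *.
    assert (E: ln (1 - 1/(M+1)) = ln M - ln (M+1)).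
    { replace (1 - 1/(M+1)) with (M * /(M+1)) by (field; lra).
      rewrite ln_mult, ln_Rinv; try lra. apply Rinv_0_lt_compat; lra. }
    assert (HL := lnB (1/(M+1))). rewrite E in HL.
    assert (HL2 : 1/(M+1) + (1/(M+1))^2/2 + (1/(M+1))^3/3 <= ln (M+1) - ln M).
    { assert (0 < 1/(M+1) < 1). { split. apply Rdiv_lt_0_compat; lra.
        apply (Rmult_lt_reg_r (M+1)); [lra|]. field_simplify; lra. }
      specialize (HL ltac:(lra)). lra. }
    clear HL E.
    assert (EN : INR (S k + 2) = M + 1) by (unfold M; rewrite <- S_INR; f_equal; lia).
    rewrite EN.
    assert (Hy : / (M+1) <= / (2*M) * 2) by (apply (Rmult_le_reg_r (2*M*(M+1))); [nra|]; field_simplify; lra).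
    assert (Hy0 : 0 < / (M+1)) by (apply Rinv_0_lt_compat; lra).
    assert (S0 * / (M+1) <= S0 * (/ (2*M) * 2)) by (apply Rmult_le_compat_l; lra).
    replace (/ (2 * (M+1))) with (/ (M+1) / 2) by (field; lra).
    replace (1 / (M+1)) with (/ (M+1)) in HL2 by (field; lra).
    assert (0 < (/ (M+1))^3/3) by (apply Rdiv_lt_0_compat; [apply pow_lt|]; lra).
    nra.
Qed.

Theorem lemma1 (N : nat) (HN : (2 <= N)%nat) :
  sum_f 2 N (fun n => / INR n)
  < ln (INR N) / ((INR N + 1) * ln ((INR N + 1) / INR N)).
Proof.
  replace N with ((N-2)+2)%nat by lia.
  assert (G := gpos (N-2)). simpl in G.
  assert (Hs := sum_nonneg (N-2)).
  set (S0 := sum_f 2 (N - 2 + 2) (fun n => / INR n)) in *.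
  set (M := INR (N-2+2)) in *.
  assert (HM : 2 <= M) by (unfold M; replace 2 with (INR 2) by (simpl; ring); apply le_INR; lia).
  replace ((M+1)/M) with (1 + /M) by (field; lra).
  assert (Hi : 0 < /M) by (apply Rinv_0_lt_compat; lra).
  assert (Lp : 0 < ln (1 + /M)) by (rewrite <- ln_1; apply ln_increasing; lra).
  assert (LA := lnA (/M) ltac:(lra)).
  assert (HD : (M+1) * ln (1 + /M) <= 1 + / (2*M)).
  { apply Rle_trans with ((M+1) * (/M - (/M)^2/2 + (/M)^3/3)).
    apply Rmult_le_compat_l; lra.
    apply (Rmult_le_reg_r (6*M^3)). nra. field_simplify; lra. }
  assert (0 < (M+1) * ln (1 + /M)) by nra.
  apply (Rmult_lt_reg_r ((M+1) * ln (1 + /M))); [lra|].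
  unfold Rdiv. rewrite Rmult_assoc, Rinv_l, Rmult_1_r by lra.
  nra.
Qed.
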